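(* Let $\mathcal C$ be a $G$-category and $(P,\phi)\colon\mathcal C\to\mathcal C/G$ the canonical functor. The pullup functor $N\mapsto N\circ P$ (with the invariance adjuster induced from $\phi$) induces an isomorphism of categories $\operatorname{Mod}(\mathcal C/G)\to\operatorname{Mod}^G\mathcal C$.
   Context: $\Bbbk$ is a commutative ring; all categories and functors are $\Bbbk$-linear; $G$ is a group; a $G$-category is a category with a group homomorphism $G\to\operatorname{Aut}$, $\alpha\mapsto A_\alpha$, written $\alpha x,\alpha f$. An invariance adjuster of a functor $F$ out of a $G$-category is a family of natural isos $\phi_\alpha\colon F\to FA_\alpha$ with $\phi_1=\mathrm{id}$ and $(\phi_\beta A_\alpha)\phi_\alpha=\phi_{\beta\alpha}$; $(F,\phi)$ is a $G$-invariant functor; morphisms are natural transformations $\eta$ with $(\eta A_\alpha)\phi_\alpha=\phi'_\alpha\eta$. $\operatorname{Mod}\mathcal D$ is the category of contravariant functors $\mathcal D\to\operatorname{Mod}\Bbbk$. A $G$-invariant $\mathcal C$-module is a $\mathcal C$-module regarded as a $G$-invariant functor $\mathcal C^{op}\to\operatorname{Mod}\Bbbk$ (with $G$ acting on $\mathcal C^{op}$ by the same automorphisms); $\operatorname{Mod}^G\mathcal C$ denotes the category of $G$-invariant $\mathcal C$-modules with morphisms of $G$-invariant functors. Orbit category $\mathcal C/G$: objects of $\mathcal C$; morphisms $x\to y$ are row- and column-finite families $(f_{\beta,\alpha})_{(\alpha,\beta)\in G\times G}$, $f_{\beta,\alpha}\in\mathcal C(\alpha x,\beta y)$, with $f_{\gamma\beta,\gamma\alpha}=\gamma(f_{\beta,\alpha})$;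 composition $(gf)_{\beta,\alpha}=\sum_\gamma g_{\beta,\gamma}f_{\gamma,\alpha}$. $Px=x$, $P(f)=(\delta_{\alpha,\beta}\alpha f)$, $\phi_{\mu,x}=(\delta_{\alpha,\beta\mu}\mathrm{id}_{\alpha x})_{(\alpha,\beta)}\in(\mathcal C/G)(Px,P\mu x)$. *)

(* Defs.v *)
From HB Require Import structures.
From mathcomp Require Import all_boot all_algebra.

Set Implicit Arguments.
Unset Strict Implicit.
Unset Printing Implicit Defensive.

Import GRing.Theory.
Local Open Scope ring_scope.

Record kcat (k : comPzRingType) := KCat {
  ob : Type;
  chom : ob -> ob -> lmodType k;
  idm : forall x, chom x x;
  comp : forall x y z, chom y z -> chom x y -> chom x z;
  compA : forall x y z w (h : chom z w) (g : chom y z) (f : chom x y),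
      comp h (comp g f) = comp (comp h g) f;
  comp1m : forall x y (f : chom x y), comp (idm y) f = f;
  compm1 : forall x y (f : chom x y), comp f (idm x) = f;
  compDl : forall x y z (c : k) (g1 g2 : chom y z) (f : chom x y),
      comp (c *: g1 + g2) f = c *: comp g1 f + comp g2 f;
  compDr : forall x y z (c : k) (g : chom y z) (f1 f2 : chom x y),
      comp g (c *: f1 + f2) = c *: comp g f1 + comp g f2 }.
Arguments idm {k} C x : rename.
Arguments comp {k} C {x y z} : rename.
Arguments chom {k} C : rename.

Definition castH (k : comPzRingType) (C : kcat k) (x x' y y' : ob C)
    (ex : x = x') (ey : y = y') (f : chom C x y) : chom C x' y' :=
  match ex in _ = x1, ey in _ = y1 return chom C x1 y1 with
  | erefl, erefl => f end.

Definition castV (T : Type) (k : comPzRingType) (V : T -> lmodType k)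
    (a b : T) (e : a = b) (v : V a) : V b :=
  match e in _ = b1 return V b1 with erefl => v end.

(* G-categories: a group homomorphism G -> Aut(C), alpha |-> A_alpha,  *)
(* written alpha x, alpha f.  The equalities A_1 = Id and              *)
(* A_(beta alpha) = A_beta A_alpha hold on objects up to Leibniz        *)
(* equality, and on morphisms up to the induced transport.             *)
Record gcat (k : comPzRingType) (G : groupType) (C : kcat k) := GCat {
  act : G -> ob C -> ob C;
  acth : forall (a : G) x y, chom C x y -> chom C (act a x) (act a y);
  acth_lin : forall a x y (c : k) (f g : chom C x y),
      acth a (c *: f + g) = c *: acth a f + acth a g;
  acth_id : forall a x, acth a (idm C x) = idm C (act a x);
  acth_comp : forall a x y z (g : chom C y z) (f : chom C x y),
      acth a (comp C g f) = comp C (acth a g) (acth a f);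
  act_one : forall x, act 1%g x = x;
  act_mul : forall (a b : G) x, act (b * a)%g x = act b (act a x);
  acth_one : forall x y (f : chom C x y),
      acth 1%g f = castH (esym (act_one x)) (esym (act_one y)) f;
  acth_mul : forall (a b : G) x y (f : chom C x y),
      acth (b * a)%g f =
      castH (esym (act_mul a b x)) (esym (act_mul a b y)) (acth b (acth a f)) }.
Arguments act {k G C} A a x : rename.
Arguments acth {k G C} A a {x y} : rename.
Arguments act_mul {k G C} A a b x : rename.
Arguments act_one {k G C} A x : rename.

Section Orbit.
Variables (k : comPzRingType) (G : groupType) (C : kcat k) (A : gcat G C).
Local Notation act := (act A).
Local Notation acth := (acth A).

(* The orbit category C/G.  A morphism x -> y is a family              *)
(*   f = (f_{beta,alpha}),  f_{beta,alpha} in C(alpha x, beta y),       *)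
(* here represented as  f b a : chom C (act a x) (act b y).             *)
Definition ofam (x y : ob C) := forall b a : G, chom C (act a x) (act b y).

Definition row_finite x y (f : ofam x y) :=
  forall b, exists s : seq G, forall a, f b a != 0 -> a \in s.
Definition col_finite x y (f : ofam x y) :=
  forall a, exists s : seq G, forall b, f b a != 0 -> b \in s.
Definition equivariant x y (f : ofam x y) :=
  forall c a b : G,
    f (c * b)%g (c * a)%g =
    castH (esym (act_mul A a c x)) (esym (act_mul A b c y)) (acth c (f b a)).

Definition ohom_pred x y (f : ofam x y) :=
  [/\ row_finite f, col_finite f & equivariant f].

Definition ohom (x y : ob C) := {f : ofam x y | ohom_pred f}.

(* h = g f in C/G :  h_{beta,alpha} = sum_gamma g_{beta,gamma} f_{gamma,alpha}
   (the sum taken over any duplicate-free finite list containing the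
   (finite) support of gamma |-> f_{gamma,alpha}) *)
Definition is_ocomp x y z (g : ofam y z) (f : ofam x y) (h : ofam x z) :=
  forall (a b : G) (s : seq G), uniq s -> (forall c, f c a != 0 -> c \in s) ->
    h b a = \sum_(c <- s) comp C (g b c) (f c a).

Definition is_oid x (e : ofam x x) :=
  (forall a, e a a = idm C (act a x)) /\ (forall a b, a != b -> e b a = 0).

Definition is_P x y (f : chom C x y) (e : ofam x y) :=
  (forall a, e a a = acth a f) /\ (forall a b, a != b -> e b a = 0).

(* e = phi_{mu,x}^{-1} : P(mu x) -> P x, whose entries are
   e_{beta,alpha} = delta_{beta, alpha mu} id_{alpha (mu x)}
   (this is the inverse of phi_{mu,x} = (delta_{alpha,beta mu} id_{alpha x})) *)
Definition is_phiinv (mu : G) x (e : ofam (act mu x) x) :=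
  (forall a, e (a * mu)%g a =
             castH (erefl _) (esym (act_mul A mu a x)) (idm C (act a (act mu x))))
  /\ (forall a b, b != (a * mu)%g -> e b a = 0).

(* Modules.  A module with underlying k-modules V x (x an object) is   *)
(* given by its action on morphisms (contravariant).                   *)

Unset Implicit Arguments.

Definition is_omod (V : ob C -> lmodType k)
    (N : forall x y, ohom x y -> V y -> V x) :=
  [/\ (forall x y (f : ohom x y) (c : k) (u v : V y),
          N x y f (c *: u + v) = c *: N x y f u + N x y f v),
      (forall x y (f1 f2 f3 : ohom x y) (c : k),
          (forall b a, sval f3 b a = c *: sval f1 b a + sval f2 b a) ->
          forall v, N x y f3 v = c *: N x y f1 v + N x y f2 v),
      (forall x (e : ohom x x), is_oid (sval e) -> forall v, N x x e v = v) &
      (forall x y z (f : ohom x y) (g : ohom y z) (h : ohom x z),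
          is_ocomp (sval g) (sval f) (sval h) ->
          forall v, N x z h v = N x y f (N y z g v))].

Definition is_cmod (V : ob C -> lmodType k)
    (M : forall x y, chom C x y -> V y -> V x) :=
  [/\ (forall x y (f : chom C x y) (c : k) (u v : V y),
          M x y f (c *: u + v) = c *: M x y f u + M x y f v),
      (forall x y (f1 f2 : chom C x y) (c : k) v,
          M x y (c *: f1 + f2) v = c *: M x y f1 v + M x y f2 v),
      (forall x v, M x x (idm C x) v = v) &
      (forall x y z (f : chom C x y) (g : chom C y z) v,
          M x z (comp C g f) v = M x y f (M y z g v))].

Definition is_gmod (V : ob C -> lmodType k)
    (M : forall x y, chom C x y -> V y -> V x)
    (psi : forall (mu : G) x, V x -> V (act mu x)) :=
  [/\ is_cmod V M,
      (forall mu x (c : k) (u v : V x),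
          psi mu x (c *: u + v) = c *: psi mu x u + psi mu x v),
      (forall mu x, bijective (psi mu x)) &
      (forall mu x y (f : chom C x y) (v : V y),
          M _ _ (acth mu f) (psi mu y v) = psi mu x (M x y f v)) /\
      ((forall x (v : V x), psi 1%g x v = castV (esym (act_one A x)) v) /\
      (forall (mu nu : G) x (v : V x),
          psi nu (act mu x) (psi mu x v) =
          castV (act_mul A mu nu x) (psi (nu * mu)%g x v)))].

Definition is_omor (V V' : ob C -> lmodType k)
    (N : forall x y, ohom x y -> V y -> V x)
    (N' : forall x y, ohom x y -> V' y -> V' x)
    (eta : forall x, V x -> V' x) :=
  (forall x (c : k) (u v : V x), eta x (c *: u + v) = c *: eta x u + eta x v)
  /\ (forall x y (f : ohom x y) (v : V y), eta x (N x y f v) = N' x y f (eta y v)).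

Definition is_gmor (V V' : ob C -> lmodType k)
    (M : forall x y, chom C x y -> V y -> V x)
    (psi : forall (mu : G) x, V x -> V (act mu x))
    (M' : forall x y, chom C x y -> V' y -> V' x)
    (psi' : forall (mu : G) x, V' x -> V' (act mu x))
    (eta : forall x, V x -> V' x) :=
  [/\ (forall x (c : k) (u v : V x), eta x (c *: u + v) = c *: eta x u + eta x v),
      (forall x y (f : chom C x y) (v : V y), eta x (M x y f v) = M' x y f (eta y v)) &
      (forall mu x (v : V x), eta (act mu x) (psi mu x v) = psi' mu x (eta x v))].

(* The pullup along (P, phi): (M, psi) is the pullup of N iff
   M = N o P (on objects V o P = V since P x = x) and
   psi_{mu,x} = N(phi_{mu,x}^{-1}) : N(P x) -> N(P mu x),
   i.e. the invariance adjuster induced from phi. *)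
Definition pullup (V : ob C -> lmodType k)
    (N : forall x y, ohom x y -> V y -> V x)
    (M : forall x y, chom C x y -> V y -> V x)
    (psi : forall (mu : G) x, V x -> V (act mu x)) :=
  (forall x y (f : chom C x y) (e : ohom x y), is_P f (sval e) ->
      forall v, M x y f v = N x y e v)
  /\ (forall mu x (e : ohom (act mu x) x), @is_phiinv mu x (sval e) ->
      forall v, psi mu x v = N _ _ e v).

End Orbit.

Arguments ohom {k G C} A x y.
Arguments is_omod {k G C A} V N.
Arguments is_cmod {k C} V M.
Arguments is_gmod {k G C A} V M psi.
Arguments is_omor {k G C A} V V' N N' eta.
Arguments is_gmor {k G C A} V V' M psi M' psi' eta.
Arguments pullup {k G C A} V N M psi.

(* Main.v *)
Require Import Defs.
From HB Require Import structures.
From mathcomp Require Import all_boot all_algebra.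
From Stdlib Require Import ProofIrrelevance FunctionalExtensionality ClassicalEpsilon.
Set Implicit Arguments.
Unset Strict Implicit.
Unset Printing Implicit Defensive.
Import GRing.Theory.
Local Open Scope ring_scope.

Section Generic.
Variable (k : comPzRingType).

Lemma lin0 (U W : lmodType k) (phi : U -> W)
  (H : forall c u v, phi (c *: u + v) = c *: phi u + phi v) : phi 0 = 0.
Proof.
have E : phi 0 = phi 0 + phi 0.
  by rewrite -{1}(addr0 (0:U)) -{1}(scale1r (0:U)) H scale1r.
by apply: (addrI (phi 0)); rewrite addr0 -E.
Qed.

Lemma linsum (U W : lmodType k) (phi : U -> W)
  (H : forall c u v, phi (c *: u + v) = c *: phi u + phi v) (I : Type) (s : seq I) F :
  phi (\sum_(i <- s) F i) = \sum_(i <- s) phi (F i).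
Proof.
elim: s => [|a s IH]; first by rewrite !big_nil (lin0 H).
by rewrite !big_cons -IH -{1}[F a]scale1r H scale1r.
Qed.

Lemma sum_delta (I : eqType) (W : zmodType) (F : I -> W) c0 (s : seq I) :
  uniq s -> (forall c, c != c0 -> F c = 0) -> (F c0 != 0 -> c0 \in s) ->
  \sum_(c <- s) F c = F c0.
Proof.
move=> us H0 Hin; case: (boolP (c0 \in s)) => Hc.
  by rewrite (bigD1_seq c0) //= big1 ?addr0 // => c /H0.
have F0 : F c0 = 0 by apply/eqP; apply: contraR Hc.
rewrite F0 big1_seq // => c /andP[_ cs]; apply: H0.
by apply: contraNneq Hc => <-.
Qed.

Lemma sum_supp (I : eqType) (W : zmodType) (F : I -> W) (s t : seq I) :
  uniq s -> uniq t -> (forall c, F c != 0 -> c \in s) ->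
  (forall c, F c != 0 -> c \in t) ->
  \sum_(c <- s) F c = \sum_(c <- t) F c.
Proof.
move=> us ut Hs Ht.
have E r : \sum_(c <- r) F c = \sum_(c <- r | F c != 0) F c.
  by rewrite [RHS]big_mkcond /=; apply: eq_bigr => c _; case: eqP.
rewrite (E s) (E t).
rewrite -[LHS]big_filter -[RHS]big_filter; apply: perm_big; apply: uniq_perm; rewrite ?filter_uniq //.
move=> c; rewrite !mem_filter; case: eqP => //= /eqP H.
by rewrite (Hs _ H) (Ht _ H).
Qed.
End Generic.

Section Casts.
Variables (k : comPzRingType) (C : kcat k).
Implicit Types (x y z : ob C).

Lemma castH_PI x x' y y' (p p' : x = x') (q q' : y = y') f :
  castH p q f = castH p' q' f.
Proof. by rewrite (proof_irrelevance _ p p') (proof_irrelevance _ q q'). Qed.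

Lemma castH_id x y (p : x = x) (q : y = y) f : castH p q f = f.
Proof. by rewrite (proof_irrelevance _ p erefl) (proof_irrelevance _ q erefl). Qed.

Lemma castH_trans x x' x'' y y' y'' (p : x = x') (p' : x' = x'')
   (q : y = y') (q' : y' = y'') f :
  castH p' q' (castH p q f) = castH (etrans p p') (etrans q q') f.
Proof. by destruct p, q, p', q'. Qed.

Lemma castH_comp x x' y y' z z' (p : x = x') (q : y = y') (r : z = z')
  (g : chom C y z) (f : chom C x y) :
  Defs.comp C (castH q r g) (castH p q f) = castH p r (Defs.comp C g f).
Proof. by destruct p, q, r. Qed.

Lemma castH_comp2 x x' y y' z z' (p : x = x') (q q' : y = y') (r : z = z')
  (g : chom C y z) (f : chom C x y) :
  Defs.comp C (castH q r g) (castH p q' f) = castH p r (Defs.comp C g f).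
Proof. by rewrite (proof_irrelevance _ q' q); destruct p, q, r. Qed.

Lemma comp_idm_castr x y z (q : x = y) (g : chom C y z) :
  Defs.comp C g (castH erefl q (idm C x)) = castH (esym q) erefl g.
Proof. by destruct q; rewrite compm1. Qed.

Lemma castH_idm x x' y (p : x = x') (q : x = y) :
  castH p q (idm C x) = castH erefl (etrans (esym p) q) (idm C x').
Proof. by destruct p, q. Qed.

Lemma comp_idm_castl x y y' (q : y = y') (f : chom C x y) :
  Defs.comp C (castH erefl q (idm C y)) f = castH erefl q f.
Proof. by destruct q; rewrite comp1m. Qed.

Lemma castH_lin x x' y y' (p : x = x') (q : y = y') c (f g : chom C x y) :
  castH p q (c *: f + g) = c *: castH p q f + castH p q g.
Proof. by destruct p, q. Qed.

Lemma castH0 x x' y y' (p : x = x') (q : y = y') : castH p q (0 : chom C x y) = 0.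
Proof. by destruct p, q. Qed.

Lemma castH_eq0 x x' y y' (p : x = x') (q : y = y') (f : chom C x y) :
  castH p q f = 0 -> f = 0.
Proof. by destruct p, q. Qed.

Lemma castHV x x' y y' (p : x = x') (q : y = y') (f : chom C x y) g :
  castH p q f = g -> f = castH (esym p) (esym q) g.
Proof. by destruct p, q => <-. Qed.

Lemma comp_m0 x y z (g : chom C y z) : Defs.comp C g (0 : chom C x y) = 0.
Proof. have := @lin0 k _ _ (fun f : chom C x y => Defs.comp C g f) (fun c u v => compDr c g u v). by []. Qed.

Lemma comp_0m x y z (f : chom C x y) : Defs.comp C (0 : chom C y z) f = 0.
Proof. have := @lin0 k _ _ (fun g : chom C y z => Defs.comp C g f) (fun c g1 g2 => compDl c g1 g2 f). by []. Qed.

Lemma comp_sumr x y z (g : chom C y z) (I : Type) (s : seq I) (F : I -> chom C x y) :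
  Defs.comp C g (\sum_(i <- s) F i) = \sum_(i <- s) Defs.comp C g (F i).
Proof. have := @linsum k _ _ (fun f : chom C x y => Defs.comp C g f) (fun c u v => compDr c g u v) I s F. by []. Qed.

End Casts.

Section CastV.
Variables (T : Type) (k : comPzRingType) (V : T -> lmodType k).

Lemma castV_PI a b (e e' : a = b) (v : V a) : castV e v = castV e' v.
Proof. by rewrite (proof_irrelevance _ e e'). Qed.

Lemma castV_id a (e : a = a) (v : V a) : castV e v = v.
Proof. by rewrite (proof_irrelevance _ e erefl). Qed.

Lemma castV_trans a b c (e : a = b) (e' : b = c) (v : V a) :
  castV e' (castV e v) = castV (etrans e e') v.
Proof. by destruct e, e'. Qed.

Lemma castV_lin a b (e : a = b) c (u v : V a) :
  castV e (c *: u + v) = c *: castV e u + castV e v.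
Proof. by destruct e. Qed.

Lemma castV_sum a b (e : a = b) (I : Type) (s : seq I) (F : I -> V a) :
  castV e (\sum_(i <- s) F i) = \sum_(i <- s) castV e (F i).
Proof. have := @linsum k _ _ (castV e) (castV_lin e) I s F. by []. Qed.

End CastV.

Section Main.
Variables (k : comPzRingType) (G : groupType) (C : kcat k) (A : gcat G C).
Local Notation act := (Defs.act A).
Local Notation acth := (Defs.acth A).
Local Notation cmp := (Defs.comp C).
Implicit Types (x y z : ob C).

Lemma acth0 a x y : acth a (0 : chom C x y) = 0.
Proof. have := @lin0 k _ _ (fun f : chom C x y => acth a f) (fun c u v => acth_lin A a c u v). by []. Qed.

Lemma acth_castH a x x' y y' (p : x = x') (q : y = y') f :
  acth a (castH p q f) = castH (congr1 (act a) p) (congr1 (act a) q) (acth a f).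
Proof. by destruct p, q. Qed.

Lemma acth_idx a a' x y (e : a = a') (p : act a x = act a' x) (q : act a y = act a' y)
  (f : chom C x y) : acth a' f = castH p q (acth a f).
Proof. by destruct e; rewrite castH_id. Qed.

Lemma fam_idx x y (f : ofam A x y) a a' b b' (ea : a = a') (eb : b = b')
  (p : act a x = act a' x) (q : act b y = act b' y) :
  f b' a' = castH p q (f b a).
Proof. by destruct ea, eb; rewrite castH_id. Qed.

Definition mono x y (f : ofam A x y) (s : G) := forall b a, b != (a * s)%g -> f b a = 0.

Definition Pf x y (f : chom C x y) : ofam A x y := fun b a =>
  match a =P b with
  | ReflectT e => castH erefl (congr1 (fun t => act t y) e) (acth a f)
  | ReflectF _ => 0 end.

Lemma Pf_eq x y (f : chom C x y) a b (e : a = b) :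
  Pf f b a = castH erefl (congr1 (fun t => act t y) e) (acth a f).
Proof. by rewrite /Pf; case: eqP => // e'; apply: castH_PI. Qed.

Lemma Pf_off x y (f : chom C x y) a b : a != b -> Pf f b a = 0.
Proof. by rewrite /Pf; case: eqP. Qed.

Lemma Pf_diag x y (f : chom C x y) a : Pf f a a = acth a f.
Proof. by rewrite (Pf_eq _ (erefl a)). Qed.

Lemma Pf_mono x y (f : chom C x y) : mono (Pf f) 1.
Proof. by move=> b a; rewrite mulg1 eq_sym; apply: Pf_off. Qed.

Lemma Pf_pred x y (f : chom C x y) : ohom_pred (Pf f).
Proof.
split.
- by move=> b; exists [:: b] => a; case: (eqVneq a b) => [->|/Pf_off ->]; rewrite ?eqxx ?inE.
- by move=> a; exists [:: a] => b; case: (eqVneq a b) => [->|/Pf_off ->]; rewrite ?eqxx ?inE.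
move=> c a b; case: (eqVneq a b) => [<-|ne].
  by rewrite !Pf_diag acth_mul; apply: castH_PI.
rewrite !Pf_off ?acth0 ?castH0 //.
by apply: contra ne => /eqP /mulgI ->.
Qed.

Definition oP x y (f : chom C x y) : ohom A x y := exist _ (Pf f) (Pf_pred f).

Definition Phf (mu : G) x : ofam A (act mu x) x := fun b a =>
  match (a * mu)%g =P b with
  | ReflectT e => castH erefl (etrans (esym (act_mul A mu a x)) (congr1 (fun t => act t x) e))
                        (idm C (act a (act mu x)))
  | ReflectF _ => 0 end.

Lemma Phf_eq mu x a b (e : (a * mu)%g = b) :
  Phf mu x b a = castH erefl (etrans (esym (act_mul A mu a x)) (congr1 (fun t => act t x) e))
     (idm C (act a (act mu x))).
Proof. by rewrite /Phf; case: eqP => // e'; apply: castH_PI. Qed.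

Lemma Phf_mono mu x : mono (Phf mu x) mu.
Proof. by move=> b a ne; rewrite /Phf; case: eqP => // e; rewrite e eqxx in ne. Qed.

Lemma Phf_pred mu x : ohom_pred (Phf mu x).
Proof.
split.
- move=> b; exists [:: (b * mu^-1)%g] => a; apply: contraR => H.
  by rewrite Phf_mono //; apply: contra H => /eqP ->; rewrite mulgK inE.
- move=> a; exists [:: (a * mu)%g] => b; apply: contraR => H.
  by rewrite Phf_mono //; apply: contra H => /eqP ->; rewrite inE.
move=> c a b; case: (eqVneq b (a * mu)%g) => [->|ne].
  rewrite (Phf_eq _ (erefl (a * mu)%g)) (Phf_eq _ (esym (mulgA c a mu))).
  by rewrite acth_castH acth_id castH_trans [RHS]castH_idm; apply: castH_PI.
rewrite !Phf_mono ?acth0 ?castH0 //.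
by rewrite -mulgA; apply: contra ne => /eqP /mulgI ->.
Qed.

Definition oPhinv mu x : ohom A (act mu x) x := exist _ (Phf mu x) (Phf_pred mu x).


(* composition with a monomial *)
Definition Cf x y z (g : ofam A y z) (f : ofam A x y) (s : G) : ofam A x z :=
  fun b a => cmp (g b (a * s)%g) (f (a * s)%g a).

Lemma Cf_ocomp x y z (g : ofam A y z) (f : ofam A x y) s :
  mono f s -> is_ocomp g f (Cf g f s).
Proof.
move=> mf a b l ul Hl; rewrite /Cf; symmetry.
apply: (sum_delta (F := fun c => cmp (g b c) (f c a))) => //.
  by move=> c /(mf c a) ->; rewrite comp_m0.
move=> H; apply: Hl; apply: contra H => /eqP ->; by rewrite comp_m0.
Qed.

Lemma is_ocomp_ext x y z (g : ofam A y z) (f : ofam A x y) h h' :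
  is_ocomp g f h -> (forall b a, h' b a = h b a) -> is_ocomp g f h'.
Proof. by move=> H E a b l ul Hl; rewrite E; apply: H. Qed.

Lemma Cf_pred x y z (g : ofam A y z) (f : ofam A x y) s :
  ohom_pred g -> ohom_pred f -> ohom_pred (Cf g f s).
Proof.
case=> rg cg eg [rf cf ef]; split.
- move=> b; have [l Hl] := rg b; exists (map (fun c => (c * s^-1)%g) l) => a H.
  have : g b (a * s)%g != 0 by apply: contra H; rewrite /Cf => /eqP ->; rewrite comp_0m.
  by move/Hl => /(map_f (fun c => (c * s^-1)%g)); rewrite mulgK.
- move=> a; have [l Hl] := cg (a * s)%g; exists l => b H; apply: Hl.
  by apply: contra H; rewrite /Cf => /eqP ->; rewrite comp_0m.
move=> c a b; rewrite /Cf -mulgA eg ef castH_comp acth_comp; apply: castH_PI.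
Qed.

Lemma Cf_mono x y z (g : ofam A y z) (f : ofam A x y) s t :
  mono g t -> mono (Cf g f s) (s * t).
Proof. by move=> mg b a ne; rewrite /Cf mg ?comp_0m // -mulgA. Qed.

Definition ocomp x y z (g : ohom A y z) (f : ohom A x y) s : ohom A x z :=
  exist _ (Cf (sval g) (sval f) s) (Cf_pred s (svalP g) (svalP f)).

Definition Af x y (c : k) (f g : ofam A x y) : ofam A x y := fun b a => c *: f b a + g b a.

Lemma Af_pred x y c (f g : ofam A x y) : ohom_pred f -> ohom_pred g -> ohom_pred (Af c f g).
Proof.
case=> rf cf ef [rg cg eg]; split.
- move=> b; have [l1 H1] := rf b; have [l2 H2] := rg b; exists (l1 ++ l2) => a H.
  rewrite mem_cat; case: (eqVneq (f b a) 0) => [E|/H1 ->//].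
  by rewrite /Af E scaler0 add0r in H; rewrite H2 ?orbT.
- move=> a; have [l1 H1] := cf a; have [l2 H2] := cg a; exists (l1 ++ l2) => b H.
  rewrite mem_cat; case: (eqVneq (f b a) 0) => [E|/H1 ->//].
  by rewrite /Af E scaler0 add0r in H; rewrite H2 ?orbT.
by move=> d a b; rewrite /Af ef eg acth_lin castH_lin.
Qed.

Definition oadd x y c (f g : ohom A x y) : ohom A x y :=
  exist _ (Af c (sval f) (sval g)) (Af_pred c (svalP f) (svalP g)).

Definition Zf x y : ofam A x y := fun b a => 0.
Lemma Zf_pred x y : ohom_pred (Zf x y).
Proof.
split.
- by move=> b; exists [::]; rewrite /Zf => a; rewrite eqxx.
- by move=> a; exists [::]; rewrite /Zf => b; rewrite eqxx.
by move=> c a b; rewrite /Zf acth0 castH0.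
Qed.
Definition ozero x y : ohom A x y := exist _ (Zf x y) (Zf_pred x y).

Lemma col1 x y (f : ohom A x y) : exists l : seq G, forall b, sval f b 1%g != 0 -> b \in l.
Proof. by case: (svalP f) => _ cf _; apply: cf. Qed.

Lemma col1u x y (f : ohom A x y) :
  exists l : seq G, uniq l /\ forall b, sval f b 1%g != 0 -> b \in l.
Proof.
have [l Hl] := col1 f; exists (undup l); split; first exact: undup_uniq.
by move=> b /Hl; rewrite mem_undup.
Qed.

(* entries of an ohom are determined by column 1 *)
Lemma equiv_col x y (f : ohom A x y) b a :
  sval f b a = castH (etrans (esym (act_mul A 1 a x)) (congr1 (fun t => act t x) (mulg1 a)))
                     (etrans (esym (act_mul A (a^-1 * b) a y)) (congr1 (fun t => act t y) (mulVKg a b)))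
                     (acth a (sval f (a^-1 * b)%g 1%g)).
Proof.
case: (svalP f) => _ _ ef.
rewrite (fam_idx (sval f) (mulg1 a) (mulVKg a b) (congr1 (fun t => act t x) (mulg1 a)) (congr1 (fun t => act t y) (mulVKg a b))) ef castH_trans.
apply: castH_PI.
Qed.


Lemma Pf0 x y b a : Pf (0 : chom C x y) b a = 0.
Proof. by rewrite /Pf; case: eqP => // e; rewrite acth0 castH0. Qed.

Definition osum x y (I : Type) (F : I -> ohom A x y) (s : seq I) : ohom A x y :=
  foldr (fun i acc => oadd 1 (F i) acc) (ozero x y) s.

Lemma osumE x y (I : Type) (F : I -> ohom A x y) (s : seq I) b a :
  sval (osum F s) b a = \sum_(i <- s) sval (F i) b a.
Proof.
elim: s => [|i s IH]; first by rewrite big_nil.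
by rewrite big_cons /= /Af scale1r IH.
Qed.


Section PsiGeneric.
Variables (V : ob C -> lmodType k) (psi : forall (mu : G) x, V x -> V (act mu x)).

Lemma psi_castV mu x x' (p : x' = x) (t : V x') :
  @psi mu x (castV p t) = castV (congr1 (act mu) p) (@psi mu x' t).
Proof. by destruct p. Qed.

Lemma psi_idx a b x (e : a = b) (R : act a x = act b x) (v : V x) :
  castV R (@psi a x v) = @psi b x v.
Proof. by destruct e; rewrite castV_id. Qed.

Hypothesis H1 : forall x v, @psi 1%g x v = castV (esym (act_one A x)) v.
Hypothesis H2 : forall mu nu x v,
  @psi nu (act mu x) (@psi mu x v) = castV (act_mul A mu nu x) (@psi (nu * mu)%g x v).

Lemma psi_bij mu x : bijective (@psi mu x).
Proof.
pose E := etrans (esym (act_mul A mu mu^-1 x))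
           (etrans (congr1 (fun t => act t x) (mulVg mu)) (act_one A x)).
exists (fun w => castV E (@psi mu^-1 (act mu x) w)).
- move=> v; rewrite H2 castV_trans.
  rewrite -(psi_idx (esym (mulVg mu)) (congr1 (fun t => act t x) (esym (mulVg mu)))).
  by rewrite H1 !castV_trans castV_id.
- move=> w; rewrite psi_castV H2 castV_trans.
  rewrite -(psi_idx (esym (mulgV mu)) (congr1 (fun t => act t (act mu x)) (esym (mulgV mu)))).
  by rewrite H1 !castV_trans castV_id.
Qed.
End PsiGeneric.

Lemma is_P_eq x y (f : chom C x y) (e : ofam A x y) : is_P f e -> forall b a, e b a = Pf f b a.
Proof.
case=> Hd Ho b a; case: (eqVneq a b) => [<-|ne]; first by rewrite Hd Pf_diag.
by rewrite Ho // Pf_off.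
Qed.

Lemma is_phiinv_eq mu x (e : ofam A (act mu x) x) : is_phiinv e -> forall b a, e b a = Phf mu x b a.
Proof.
case=> Hd Ho b a; case: (eqVneq b (a * mu)%g) => [->|ne]; last by rewrite Ho // Phf_mono.
by rewrite Hd (Phf_eq _ (erefl (a * mu)%g)); apply: castH_PI.
Qed.

Lemma Pf_oid x : is_oid (Pf (idm C x)).
Proof. by split=> [a|a b ne]; rewrite ?Pf_diag ?acth_id ?Pf_off. Qed.

Lemma Pf_isP x y (f : chom C x y) : is_P f (Pf f).
Proof. by split=> [a|a b ne]; rewrite ?Pf_diag ?Pf_off. Qed.

Lemma Phf_isphi mu x : is_phiinv (Phf mu x).
Proof. by split=> [a|a b ne]; rewrite ?(Phf_eq _ (erefl (a * mu)%g)) ?Phf_mono //; apply: castH_PI. Qed.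

Section OmodTheory.
Variables (V : ob C -> lmodType k) (N : forall x y, ohom A x y -> V y -> V x).
Hypothesis HN : is_omod V N.

Lemma N_ext x y (f f' : ohom A x y) v :
  (forall b a, sval f b a = sval f' b a) -> @N x y f v = @N x y f' v.
Proof.
case: HN => _ H2 _ _ E.
by rewrite (H2 x y f' f' f 0) ?scale0r ?add0r // => b a; rewrite E scale0r add0r.
Qed.

Lemma N_cast x x' y (p : x' = x) (f : ohom A x y) (f' : ohom A x' y) v :
  (forall b a, sval f b a = castH (congr1 (act a) p) erefl (sval f' b a)) ->
  @N x y f v = castV p (@N x' y f' v).
Proof. by destruct p => E; apply: N_ext => b a; rewrite E castH_id. Qed.

Lemma N_zero x y v : @N x y (ozero x y) v = 0.
Proof.
case: HN => _ H2 _ _.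
have E : @N x y (ozero x y) v = 1 *: @N x y (ozero x y) v + @N x y (ozero x y) v.
  by apply: H2 => b a; rewrite /= /Zf scale1r addr0.
rewrite scale1r in E.
by apply: (addrI (@N x y (ozero x y) v)); rewrite addr0 -E.
Qed.

Lemma N_sum x y (I : Type) (F : I -> ohom A x y) (s : seq I) v :
  @N x y (osum F s) v = \sum_(i <- s) @N x y (F i) v.
Proof.
case: HN => _ H2 _ _.
elim: s => [|i s IH]; first by rewrite big_nil N_zero.
by rewrite big_cons -IH (H2 x y (F i) (osum F s) (osum F (i :: s)) 1) ?scale1r.
Qed.

Lemma N_decomp x y (f : ohom A x y) (l : seq G) :
  uniq l -> (forall b, sval f b 1%g != 0 -> b \in l) -> forall v,
  @N x y f v = castV (act_one A x)
     (\sum_(be <- l) @N _ _ (oP (sval f be 1%g)) (@N _ _ (oPhinv be y) v)).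
Proof.
move=> ul Hl v; case: (HN) => _ _ _ H4.
under eq_bigr => be _ do rewrite -(H4 _ _ _ (oP (sval f be 1%g)) (oPhinv be y)
    (ocomp (oPhinv be y) (oP (sval f be 1%g)) 1) (Cf_ocomp _ (Pf_mono _))).
rewrite -N_sum; apply: N_cast => b a; rewrite osumE /=.
rewrite (sum_delta (c0 := (a^-1 * b)%g)) //.
- rewrite /Cf (Phf_eq _ (etrans (congr1 (fun t => (t * (a^-1 * b))%g) (mulg1 a)) (mulVKg a b))).
  rewrite (Pf_eq _ (esym (mulg1 a))) comp_idm_castl castH_trans equiv_col castH_trans.
  apply: castH_PI.
- move=> c ne; rewrite /Cf Phf_mono ?comp_0m // mulg1.
  by apply: contra ne => /eqP ->; rewrite mulKg.
- move=> H; apply: Hl; apply: contra H => /eqP ->.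
  by rewrite /Cf Pf0 comp_m0.
Qed.


Lemma N_pull_decomp (M : forall x y, chom C x y -> V y -> V x)
  (psi : forall (mu : G) x, V x -> V (act mu x)) :
  pullup V N M psi -> forall x y (f : ohom A x y) l, uniq l ->
  (forall b, sval f b 1%g != 0 -> b \in l) -> forall v,
  @N x y f v = castV (act_one A x) (\sum_(be <- l) M _ _ (sval f be 1%g) (psi be y v)).
Proof.
move=> [HP HPh] x y f l ul Hl v; rewrite (N_decomp ul Hl); congr (castV _ _).
apply: eq_bigr => be _.
by rewrite -(HPh be y (oPhinv be y) (Phf_isphi be y)) -(HP _ _ (sval f be 1%g) (oP _) (Pf_isP _)).
Qed.

Definition M0 x y (f : chom C x y) (v : V y) : V x := @N x y (oP f) v.
Definition psi0 mu x (v : V x) : V (act mu x) := @N _ _ (oPhinv mu x) v.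
Arguments M0 : clear implicits.
Arguments psi0 : clear implicits.

Lemma pull0 : pullup V N M0 psi0.
Proof.
split.
- move=> x y f e He v; apply: N_ext => b a /=; symmetry; exact: is_P_eq.
- move=> mu x e He v; apply: N_ext => b a /=; symmetry; exact: is_phiinv_eq.
Qed.

Lemma psi0_one x v : psi0 1%g x v = castV (esym (act_one A x)) v.
Proof.
case: (HN) => _ _ H3 _.
rewrite /psi0 (N_cast (p := esym (act_one A x)) (f' := oP (idm C x))); first by rewrite H3 //; exact: Pf_oid.
move=> b a /=; case: (eqVneq a b) => [<-|ne].
  rewrite (Phf_eq _ (mulg1 a)) Pf_diag acth_id [RHS]castH_idm; apply: castH_PI.
by rewrite Pf_off // castH0 Phf_mono // mulg1 eq_sym.
Qed.

Lemma psi0_mul mu nu x v :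
  psi0 nu (act mu x) (psi0 mu x v) = castV (act_mul A mu nu x) (psi0 (nu * mu)%g x v).
Proof.
case: (HN) => _ _ _ H4.
rewrite /psi0 -(H4 _ _ _ (oPhinv nu (act mu x)) (oPhinv mu x)
   (ocomp (oPhinv mu x) (oPhinv nu (act mu x)) nu) (Cf_ocomp _ (@Phf_mono nu (act mu x)))).
apply: N_cast => b a /=; rewrite /Cf.
case: (eqVneq b (a * (nu * mu))%g) => [->|ne].
  rewrite (Phf_eq _ (esym (mulgA a nu mu))) (Phf_eq _ (erefl (a * nu)%g)) comp_idm_castl.
  rewrite castH_trans (Phf_eq _ (erefl (a * (nu * mu))%g)). rewrite (castH_trans _ _ _ _ (idm C (act a (act (nu * mu)%g x)))). rewrite [RHS]castH_idm.
  apply: castH_PI.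
by rewrite (@Phf_mono (nu * mu)%g x b a ne) castH0 Phf_mono ?comp_0m // -mulgA.
Qed.

Lemma gmod0 : is_gmod V M0 psi0.
Proof.
case: (HN) => H1 H2 H3 H4; split.
- split.
  + by move=> x y f c u w; apply: H1.
  + move=> x y f1 f2 c v; apply: H2 => b a /=; rewrite /Pf.
    by case: eqP => e; rewrite ?acth_lin ?castH_lin // scaler0 addr0.
  + by move=> x v; apply: H3; exact: Pf_oid.
  + move=> x y z f g v; apply: H4; apply: (is_ocomp_ext (Cf_ocomp _ (Pf_mono f))) => b a /=.
    rewrite /Cf; case: (eqVneq a b) => [<-|ne].
      rewrite Pf_diag (Pf_eq _ (mulg1 a)) (Pf_eq _ (esym (mulg1 a))) acth_comp.
      rewrite (acth_idx (esym (mulg1 a)) (congr1 (fun t => act t y) (esym (mulg1 a)))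
                 (congr1 (fun t => act t z) (esym (mulg1 a))) g) castH_trans castH_comp2.
      by rewrite castH_id.
    by rewrite Pf_off // (@Pf_off y z g) ?comp_0m // mulg1.
- by move=> mu x c u w; apply: H1.
- apply: psi_bij; [exact: psi0_one | exact: psi0_mul].
split; last by split; [exact: psi0_one | exact: psi0_mul].
move=> mu x y f v; rewrite /M0 /psi0.
rewrite -(H4 _ _ _ (oP (acth mu f)) (oPhinv mu y) (ocomp (oPhinv mu y) (oP (acth mu f)) 1)
   (Cf_ocomp _ (Pf_mono _))).
rewrite -(H4 _ _ _ (oPhinv mu x) (oP f) (ocomp (oP f) (oPhinv mu x) mu)
   (Cf_ocomp _ (@Phf_mono mu x))).
apply: N_ext => b a /=; rewrite /Cf.
case: (eqVneq b (a * mu)%g) => [->|ne].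
  rewrite (Phf_eq _ (congr1 (fun t => (t * mu)%g) (mulg1 a))) (Pf_eq _ (esym (mulg1 a))).
  rewrite comp_idm_castl castH_trans Pf_diag (Phf_eq _ (erefl (a * mu)%g)) comp_idm_castr.
  rewrite acth_mul castH_trans; apply: castH_PI.
by rewrite (@Phf_mono mu y b (a * 1)%g) ?mulg1 // comp_0m (@Pf_off x y f (a * mu)%g b) ?comp_0m // eq_sym.
Qed.

End OmodTheory.


Lemma col_nz x y (f : ohom A x y) b a : sval f b a != 0 -> sval f (a^-1 * b)%g 1%g != 0.
Proof. by rewrite equiv_col; apply: contra => /eqP ->; rewrite acth0 castH0. Qed.

Section MGeneric.
Variables (V : ob C -> lmodType k) (M : forall x y, chom C x y -> V y -> V x).

Lemma M_castH x x' y y' (p : x = x') (q : y = y') f v :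
  @M x' y' (castH p q f) (castV q v) = castV p (@M x y f v).
Proof. by destruct p, q. Qed.

Lemma M_castH2 x x' y y' (p : x = x') (q q' : y = y') f v :
  @M x' y' (castH p q f) (castV q' v) = castV p (@M x y f v).
Proof. by rewrite (proof_irrelevance _ q' q); destruct p, q. Qed.

Lemma M_idx y w (F : forall t : G, chom C (act t y) w) a a' (e : a' = a)
   (R : act a' y = act a y) u :
  castV R (@M _ _ (F a') u) = @M _ _ (F a) u.
Proof. by destruct e; rewrite castV_id. Qed.

Lemma M_idm_cast u u' (q : u = u') (w : V u') :
  (forall x v, @M x x (idm C x) v = v) ->
  @M _ _ (castH erefl q (idm C u)) w = castV (esym q) w.
Proof. by destruct q => H; rewrite H. Qed.
End MGeneric.

Definition supp x y (f : ohom A x y) : seq G :=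
  undup (proj1_sig (constructive_indefinite_description _ (col1 f))).

Lemma supp_uniq x y (f : ohom A x y) : uniq (supp f).
Proof. exact: undup_uniq. Qed.

Lemma supp_mem x y (f : ohom A x y) b : sval f b 1%g != 0 -> b \in supp f.
Proof.
rewrite /supp mem_undup; move: b.
exact: (proj2_sig (constructive_indefinite_description _ (col1 f))).
Qed.

Section GmodTheory.
Variables (V : ob C -> lmodType k) (M : forall x y, chom C x y -> V y -> V x)
  (psi : forall (mu : G) x, V x -> V (act mu x)).
Hypothesis HM : is_gmod V M psi.

Definition N1 x y (f : ohom A x y) (v : V y) : V x :=
  castV (act_one A x) (\sum_(be <- supp f) M (sval f be 1%g) (@psi be y v)).
Arguments N1 : clear implicits.

Lemma Mv_lin x y (f : chom C x y) c u v : M f (c *: u + v) = c *: M f u + M f v.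
Proof. by case: HM => [[H _ _ _] _ _ _]; apply: H. Qed.
Lemma Mf_lin x y (f1 f2 : chom C x y) c v : M (c *: f1 + f2) v = c *: M f1 v + M f2 v.
Proof. by case: HM => [[_ H _ _] _ _ _]; apply: H. Qed.
Lemma M_id x v : M (idm C x) v = v.
Proof. by case: HM => [[_ _ H _] _ _ _]; apply: H. Qed.
Lemma M_comp x y z (f : chom C x y) (g : chom C y z) v : M (Defs.comp C g f) v = M f (M g v).
Proof. by case: HM => [[_ _ _ H] _ _ _]; apply: H. Qed.
Lemma psi_lin mu x c u v : @psi mu x (c *: u + v) = c *: @psi mu x u + @psi mu x v.
Proof. by case: HM => _ H _ _; apply: H. Qed.
Lemma psi_nat mu x y (f : chom C x y) v : M (acth mu f) (@psi mu y v) = @psi mu x (M f v).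
Proof. by case: HM => _ _ _ [H _]; apply: H. Qed.
Lemma psi_one x v : @psi 1%g x v = castV (esym (act_one A x)) v.
Proof. by case: HM => _ _ _ [_ [H _]]; apply: H. Qed.
Lemma psi_mul mu nu x v :
  @psi nu (act mu x) (@psi mu x v) = castV (act_mul A mu nu x) (@psi (nu * mu)%g x v).
Proof. by case: HM => _ _ _ [_ [_ H]]; apply: H. Qed.

Lemma M0f x y (v : V y) : M (0 : chom C x y) v = 0.
Proof. have := @lin0 k _ _ (fun f : chom C x y => M f v) (fun c u w => Mf_lin u w c v). by []. Qed.

Lemma Msum_v x y (f : chom C x y) (I : Type) (s : seq I) F :
  M f (\sum_(i <- s) F i) = \sum_(i <- s) M f (F i).
Proof. have := @linsum k _ _ (M f) (Mv_lin f) I s F. by []. Qed.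

Lemma Msum_f x y (I : Type) (s : seq I) (F : I -> chom C x y) v :
  M (\sum_(i <- s) F i) v = \sum_(i <- s) M (F i) v.
Proof. have := @linsum k _ _ (fun f : chom C x y => M f v) (fun c u w => Mf_lin u w c v) I s F. by []. Qed.

Lemma psi_sum mu x (I : Type) (s : seq I) F :
  @psi mu x (\sum_(i <- s) F i) = \sum_(i <- s) @psi mu x (F i).
Proof. have := @linsum k _ _ (@psi mu x) (@psi_lin mu x) I s F. by []. Qed.

Lemma N1E x y (f : ohom A x y) l : uniq l -> (forall b, sval f b 1%g != 0 -> b \in l) ->
  forall v, N1 x y f v = castV (act_one A x) (\sum_(be <- l) M (sval f be 1%g) (@psi be y v)).
Proof.
move=> ul Hl v; rewrite /N1; congr (castV _ _); apply: sum_supp => //.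
- exact: supp_uniq.
- by move=> c H; apply: supp_mem; apply: contra H => /eqP ->; rewrite M0f.
- by move=> c H; apply: Hl; apply: contra H => /eqP ->; rewrite M0f.
Qed.


Lemma N1_comp x y z (f : ohom A x y) (g : ohom A y z) (h : ohom A x z) v :
  is_ocomp (sval g) (sval f) (sval h) -> N1 x z h v = N1 x y f (N1 y z g v).
Proof.
move=> Hc; have eg : equivariant (sval g) by case: (svalP g).
pose T := undup (supp h ++ [seq (ga * de)%g | ga <- supp f, de <- supp g]).
have uT : uniq T by exact: undup_uniq.
rewrite (@N1E x z h T uT); last by move=> b /supp_mem H; rewrite mem_undup mem_cat H.
rewrite {1}/N1; congr (castV _ _).
under eq_bigr => de _ do rewrite (Hc 1%g de (supp f) (supp_uniq f) (@supp_mem _ _ f)) Msum_f.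
under eq_bigr => de _ do under eq_bigr => ga _ do rewrite M_comp.
rewrite exchange_big /=; apply: eq_big_seq => ga Hga; rewrite -Msum_v; congr (M _ _).
rewrite /N1 psi_castV psi_sum castV_sum.
have term de : castV (congr1 (act ga) (act_one A y))
    (@psi ga _ (M (sval g de 1%g) (@psi de z v))) = M (sval g (ga * de)%g ga) (@psi (ga * de)%g z v).
  rewrite -psi_nat psi_mul (castHV (esym (eg ga 1%g de))) M_castH2 castV_trans.
  exact: (@M_idx V M _ _ (fun t => sval g (ga * de)%g t) _ _ (mulg1 ga)).
symmetry; under eq_bigr => de _ do rewrite term.
rewrite -(big_map (fun de => (ga * de)%g) xpredT (fun de' => M (sval g de' ga) (@psi de' z v))).
symmetry; apply: sum_supp => //.
- by rewrite map_inj_uniq ?supp_uniq //; apply: mulgI.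
- move=> de' H; have : sval g de' ga != 0 by apply: contra H => /eqP ->; rewrite M0f.
  move/col_nz/supp_mem => H'; rewrite -(mulVKg ga de') mem_undup mem_cat.
  by rewrite (allpairs_f (fun a b => (a * b)%g) Hga H') orbT.
- move=> de' H; have : sval g de' ga != 0 by apply: contra H => /eqP ->; rewrite M0f.
  move/col_nz/supp_mem => H'; rewrite -(mulVKg ga de');exact: map_f.
Qed.


Lemma omod1 : is_omod V N1.
Proof.
split.
- move=> x y f c u w; rewrite /N1 -castV_lin; congr (castV _ _).
  rewrite scaler_sumr -big_split /=; apply: eq_bigr => be _.
  by rewrite psi_lin Mv_lin.
- move=> x y f1 f2 f3 c E v.
  pose T := undup (supp f1 ++ supp f2 ++ supp f3).
  have uT : uniq T by exact: undup_uniq.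
  have HT (f : ohom A x y) : {subset supp f <= T} -> forall b, sval f b 1%g != 0 -> b \in T.
    by move=> sub b /supp_mem /sub.
  have H1 : forall b, sval f1 b 1%g != 0 -> b \in T.
    by apply: HT => b; rewrite /T mem_undup !mem_cat => ->.
  have H2 : forall b, sval f2 b 1%g != 0 -> b \in T.
    by apply: HT => b; rewrite /T mem_undup !mem_cat => ->; rewrite orbT.
  have H3 : forall b, sval f3 b 1%g != 0 -> b \in T.
    by apply: HT => b; rewrite /T mem_undup !mem_cat => ->; rewrite !orbT.
  rewrite (N1E uT H1) (N1E uT H2) (N1E uT H3) -castV_lin; congr (castV _ _).
  rewrite scaler_sumr -big_split /=; apply: eq_bigr => be _.
  by rewrite E Mf_lin.
- move=> x e [Hd Ho] v.
  rewrite (@N1E x x e [:: 1%g]) // ?big_seq1 ?Hd ?psi_one ?M_id ?castV_trans ?castV_id //.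
  move=> b; apply: contraR; rewrite inE => ne; apply/eqP; apply: Ho; by rewrite eq_sym.
- move=> x y z f g h Hc v; exact: N1_comp.
Qed.

Lemma pull1 : pullup V N1 M psi.
Proof.
split.
- move=> x y f e [Hd Ho] v.
  rewrite (@N1E x y e [:: 1%g]) // ?big_seq1 ?Hd ?psi_one.
    by rewrite acth_one M_castH castV_trans castV_id.
  move=> b; apply: contraR; rewrite inE => ne; apply/eqP; apply: Ho; by rewrite eq_sym.
- move=> mu x e [Hd Ho] v.
  rewrite (@N1E _ x e [:: mu]) // ?big_seq1.
    have -> : sval e mu 1%g = castH erefl (congr1 (fun t => act t x) (mul1g mu))
                   (sval e (1 * mu)%g 1%g) by exact: (fam_idx _ (erefl 1%g) (mul1g mu)).
    rewrite Hd castH_trans (@M_idm_cast V M _ _ _ _ M_id) castV_trans castV_id //.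
  move=> b; apply: contraR; rewrite inE => ne; apply/eqP; apply: Ho; by rewrite mul1g.
Qed.

End GmodTheory.


Lemma eta_castV (V V' : ob C -> lmodType k) (eta : forall x, V x -> V' x) x x' (p : x = x') v :
  eta x' (castV p v) = castV p (eta x v).
Proof. by destruct p. Qed.

End Main.

Theorem mainTheorem15 (k : comPzRingType) (G : groupType) (C : kcat k)
    (A : gcat G C) :
  (forall (V : ob C -> lmodType k) (N : forall x y, ohom A x y -> V y -> V x),
     is_omod V N ->
     exists M : forall x y, chom C x y -> V y -> V x,
     exists psi : forall (mu : G) x, V x -> V (act A mu x),
       [/\ is_gmod V M psi, pullup V N M psi &
           forall M' psi', pullup V N M' psi' -> M' = M /\ psi' = psi])
  /\ (forall (V : ob C -> lmodType k) (N N' : forall x y, ohom A x y -> V y -> V x)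
        (M : forall x y, chom C x y -> V y -> V x)
        (psi : forall (mu : G) x, V x -> V (act A mu x)),
        is_omod V N -> is_omod V N' -> pullup V N M psi -> pullup V N' M psi ->
        N = N')
  /\ (forall (V : ob C -> lmodType k) (M : forall x y, chom C x y -> V y -> V x)
        (psi : forall (mu : G) x, V x -> V (act A mu x)),
        is_gmod V M psi ->
        exists N, is_omod V N /\ pullup V N M psi)
  /\ (forall (V V' : ob C -> lmodType k)
        (N : forall x y, ohom A x y -> V y -> V x)
        (N' : forall x y, ohom A x y -> V' y -> V' x)
        (M : forall x y, chom C x y -> V y -> V x)
        (psi : forall (mu : G) x, V x -> V (act A mu x))
        (M' : forall x y, chom C x y -> V' y -> V' x)
        (psi' : forall (mu : G) x, V' x -> V' (act A mu x))
        (eta : forall x, V x -> V' x),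
        is_omod V N -> is_omod V' N' ->
        pullup V N M psi -> pullup V' N' M' psi' ->
        (is_omor V V' N N' eta <-> is_gmor V V' M psi M' psi' eta)).
Proof.
split; [|split; [|split]].
- move=> V N HN; exists (M0 N), (psi0 N); split.
  + exact: gmod0.
  + exact: pull0.
  move=> M' psi' [HP HPh]; split.
  + apply: functional_extensionality_dep => x; apply: functional_extensionality_dep => y.
    apply: functional_extensionality_dep => f; apply: functional_extensionality => v.
    exact: (HP x y f (oP A f) (Pf_isP A f) v).
  + apply: functional_extensionality_dep => mu; apply: functional_extensionality_dep => x.
    apply: functional_extensionality => v.
    exact: (HPh mu x (oPhinv A mu x) (Phf_isphi A mu x) v).
- move=> V N N' M psi HN HN' HP HP'.
  apply: functional_extensionality_dep => x; apply: functional_extensionality_dep => y.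
  apply: functional_extensionality_dep => f; apply: functional_extensionality => v.
  have [l [ul Hl]] := col1u f.
  by rewrite (N_pull_decomp HN HP ul Hl) (N_pull_decomp HN' HP' ul Hl).
- move=> V M psi HM; exists (N1 M psi); split; [exact: omod1 | exact: pull1].
move=> V V' N N' M psi M' psi' eta HN HN' HP HP'; split.
- case=> Hlin Hnat; split => //.
  + move=> x y f v.
    by rewrite (proj1 HP x y f (oP A f) (Pf_isP A f)) (proj1 HP' x y f (oP A f) (Pf_isP A f)) Hnat.
  + move=> mu x v.
    by rewrite (proj2 HP mu x (oPhinv A mu x) (Phf_isphi A mu x))
               (proj2 HP' mu x (oPhinv A mu x) (Phf_isphi A mu x)) Hnat.
- case=> Hlin HM Hpsi; split => // x y f v.
  have [l [ul Hl]] := col1u f.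
  rewrite (N_pull_decomp HN HP ul Hl) (N_pull_decomp HN' HP' ul Hl) eta_castV.
  congr (castV _ _).
  have := @linsum k _ _ (eta (act A 1%g x)) (Hlin (act A 1%g x)) G l; move=> ->.
  by apply: eq_bigr => be _; rewrite HM Hpsi.
Qed.
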